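(* Let $n\ge 2$ and let $(G(k))_{k\in\mathbb{N}}$ be a sequence of digraphs on $\mathcal{V}=\{1,\dots,n\}$ with knowledge sets evolving by the flooding update described in the context. Let $\psi(k)=n$ for $k\le\lceil n/2\rceil-1$ and $\psi(k)=n-k$ for $k\ge\lceil n/2\rceil$; let $\nu(k)=k+2$ for $k\le\lceil n/2\rceil-1$ and $\nu(k)=n$ for $k\ge\lceil n/2\rceil$; and let $\eta(k)=\min\{\psi(k),\nu(k)\}$. If for every $k\in\{0,1,\dots,n-2\}$ the digraph $G(k)$ contains $\eta(k)(k)$, then $\sum_{i=1}^n|\mathcal{K}_i(n-1)|=n^2$.
   Context: Network: $\mathcal{V}=\{1,\dots,n\}$; node $i$ holds initial data $d_i\in\mathbb{R}$, pairwise distinct. At discrete times $k\in\mathbb{N}$ communication follows digraph $G(k)=(\mathcal{V},\mathcal{E}(k))$; node $i$ sends to $j$ at time $k$ iff $(i,j)\in\mathcal{E}(k)$. Knowledge sets: $\mathcal{K}_i(0)=\{d_i\}$ and $\mathcal{K}_j(k+1)=\mathcal{K}_j(k)\cup\bigcup_{i:(i,j)\in\mathcal{E}(k)}\mathcal{K}_i(k)$. An input-cord to node $i$ at time $k$ is an ordered list $(\mathcal{I}^i_1,\dots,\mathcal{I}^i_m)$ of pairwise distinct nodes of $\mathcal{V}\setminus\{i\}$ with $(\mathcal{I}^i_j,\mathcal{I}^i_{j+1})\in\mathcal{E}(k)$ for $j=1,\dots,m-1$ and $(\mathcal{I}^i_m,i)\in\mathcal{E}(k)$; its cardinality is $m$.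 It is closed if moreover $(i,\mathcal{I}^i_1)\in\mathcal{E}(k)$. For an integer $\chi$, node $i$ is contained in a $\chi(k)$-cycle if it has at time $k$ a closed input-cord of cardinality greater than $\chi-2$; $G(k)$ contains $\chi(k)$ if every node is contained in a $\chi(k)$-cycle. *)

(* Defs.v *)
From HB Require Import structures.
From mathcomp Require Import all_boot all_order all_algebra.
From mathcomp Require Import finmap.
From mathcomp Require Import reals.

Set Implicit Arguments.
Unset Strict Implicit.
Unset Printing Implicit Defensive.


(* Nodes are 'I_n; the time-varying digraph is E : nat -> rel 'I_n,
   with E k i j meaning (i,j) \in E(k), i.e. i sends to j at time k. *)

Fixpoint knowledge (R : realType) (n : nat) (E : nat -> rel 'I_n)
    (d : 'I_n -> R) (k : nat) (j : 'I_n) : {fset R} :=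
  match k with
  | 0 => [fset d j]%fset
  | k'.+1 => (knowledge E d k' j
             `|` \bigcup_(i <- enum 'I_n | E k' i j) knowledge E d k' i)%fset
  end.

Definition input_cord (n : nat) (e : rel 'I_n) (i : 'I_n) (s : seq 'I_n) : bool :=
  if s is x :: p then [&& path e x p, e (last x p) i, uniq s & i \notin s]
  else false.

Definition closed_input_cord (n : nat) (e : rel 'I_n) (i : 'I_n) (s : seq 'I_n) : bool :=
  input_cord e i s && e i (head i s).

(* node i is contained in a chi-cycle: closed input-cord of cardinality > chi - 2
   (written chi < size s + 2 to avoid truncated subtraction) *)
Definition in_chi_cycle (n : nat) (e : rel 'I_n) (chi : nat) (i : 'I_n) : Prop :=
  exists s : seq 'I_n, closed_input_cord e i s /\ chi < size s + 2.

Definition contains_chi (n : nat) (e : rel 'I_n) (chi : nat) : Prop :=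
  forall i : 'I_n, in_chi_cycle e chi i.

(* ceil(n/2) = uphalf n *)
Definition psi_fn (n k : nat) : nat := if k <= (uphalf n).-1 then n else n - k.
Definition nu_fn (n k : nat) : nat := if k <= (uphalf n).-1 then k + 2 else n.
Definition eta_fn (n k : nat) : nat := minn (psi_fn n k) (nu_fn n k).

(* Main.v *)
Require Import Defs.
From HB Require Import structures.
From mathcomp Require Import all_boot all_order all_algebra.
From mathcomp Require Import finmap.
From mathcomp Require Import reals.
From mathcomp Require Import zify.

Set Implicit Arguments.
Unset Strict Implicit.

Section Aux.
Variables (n : nat).

Lemma cross1 (e : rel 'I_n) (A : {set 'I_n}) (p : seq 'I_n) (x : 'I_n) :
  x \in A -> path e x p -> has (fun y => y \notin A) p ->
  exists u v, [/\ u \in A, v \notin A & e u v].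
Proof.
elim: p x => [//|y p IH] x xA /= /andP[exy pp] /orP[yA|hp].
  by exists x, y.
case: (boolP (y \in A)) => yA; first exact: (IH y).
by exists x, y.
Qed.

Lemma cross2 (e : rel 'I_n) (A : {set 'I_n}) (p : seq 'I_n) (x : 'I_n) :
  path e x p -> has (fun y => y \in A) (x :: p) -> last x p \notin A ->
  exists u v, [/\ u \in A, v \notin A & e u v].
Proof.
elim: p x => [|y p IH] x /=; first by rewrite orbF => _ ->.
move=> /andP[exy pp] hh hl.
case: (boolP (x \in A)) => xA.
  case: (boolP (y \in A)) => yA; last by exists x, y.
  by apply: (IH y) => //=; rewrite yA.
by apply: (IH y) => //; move: hh; rewrite /= (negbTE xA).
Qed.

Lemma cycle_cross (e : rel 'I_n) (A : {set 'I_n}) (w : 'I_n) (s : seq 'I_n) :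
  closed_input_cord e w s ->
  ((w \in A) && (#|A| < (size s).+1)) || ((w \notin A) && (n - #|A| < (size s).+1)) ->
  exists u v, [/\ u \in A, v \notin A & e u v].
Proof.
case: s => [//|x p] /andP[/and4P[px el uq wn] ewx].
have pc : path e w (rcons (x :: p) w) by rewrite rcons_path /= ewx px.
have uq2 : uniq (w :: x :: p) by rewrite /= wn.
case/orP=> /andP[wA hc].
  apply: (cross1 wA pc); rewrite has_rcons; apply/orP; right.
  apply/negPn/negP => /hasPn H.
  have sub : {subset (w :: x :: p) <= A}.
    move=> z; rewrite inE => /orP[/eqP->//|zs].
    by have := H z zs; rewrite negbK.
  have := subset_leq_card (introT subsetP sub).
  by rewrite (card_uniqP uq2) /= leqNgt hc.
apply: (cross2 pc); last by rewrite last_rcons.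
apply/negPn/negP => /hasPn H.
have sub : {subset (w :: x :: p) <= ~: A}.
  move=> z zs; rewrite in_setC; apply: H.
  by rewrite inE mem_rcons zs orbT.
have := subset_leq_card (introT subsetP sub).
rewrite (card_uniqP uq2).
have hC : #|~: A| = n - #|A| by have h := cardsC A; rewrite card_ord in h; move: h; clear; lia.
rewrite hC /= => hle; move: hc hle; rewrite /=; clear; lia.
Qed.
End Aux.

Lemma know_mono (R : realType) (n : nat) (E : nat -> rel 'I_n) (d : 'I_n -> R) k j :
  (knowledge E d k j `<=` knowledge E d k.+1 j)%fset.
Proof. by rewrite /= fsubsetUl. Qed.

Lemma know_edge (R : realType) (n : nat) (E : nat -> rel 'I_n) (d : 'I_n -> R) k u v x :
  E k u v -> x \in knowledge E d k u -> x \in knowledge E d k.+1 v.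
Proof.
move=> euv xu; rewrite /= in_fsetU; apply/orP; right.
by apply/bigfcupP; exists u => //; rewrite mem_enum euv.
Qed.

Lemma know_img (R : realType) (n : nat) (E : nat -> rel 'I_n) (d : 'I_n -> R) k j x :
  x \in knowledge E d k j -> exists y, x = d y.
Proof.
elim: k j => [|k IH] j /=; first by rewrite in_fset1 => /eqP ->; exists j.
rewrite in_fsetU => /orP[/IH//|/bigfcupP[i _ /IH//]].
Qed.

Theorem theorem3 (R : realType) (n : nat) (E : nat -> rel 'I_n) (d : 'I_n -> R) :
  2 <= n ->
  injective d ->
  (forall k : nat, k <= n - 2 -> contains_chi (E k) (eta_fn n k)) ->
  (\sum_(i < n) #|` knowledge E d (n - 1) i|)%N = (n ^ 2)%N.
Proof.
move=> n2 dinj Hc.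
pose F i k := [set j : 'I_n | d i \in knowledge E d k j].
have Fmono : forall i k, F i k \subset F i k.+1.
  move=> i k; apply/subsetP => j; rewrite !in_set => h.
  exact: (fsubsetP (know_mono E d k j)) _ h.
have claim : forall i k, k <= n - 1 -> minn n k.+1 <= #|F i k|.
  move=> i; elim=> [_|k IH hk].
    apply: leq_trans (geq_minr _ _) _.
    by apply/card_gt0P; exists i; rewrite inE /= in_fset1.
  have hk' : k <= n - 2 by move: hk n2; clear; lia.
  have IH' := IH (ltnW hk).
  have e1 : minn n k.+1 = k.+1 by move: hk n2; clear; lia.
  have e2 : minn n k.+2 = k.+2 by move: hk n2; clear; lia.
  rewrite e2; rewrite e1 in IH'.
  case: (leqP k.+2 #|F i k|) => hF.
    exact: leq_trans hF (subset_leq_card (Fmono i k)).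
  have hFe : #|F i k| = k.+1 by apply/eqP; rewrite eqn_leq IH' -ltnS hF.
  have [u [v [uF vF euv]]] : exists u v, [/\ u \in F i k, v \notin F i k & E k u v].
    have Hk := Hc k hk'.
    have : eta_fn n k = k.+2 \/ eta_fn n k = n - k.
      rewrite /eta_fn /psi_fn /nu_fn; case: ifP => _.
        left; rewrite /minn; case: ifP; move: hk' n2; clear; lia.
      right; rewrite /minn; case: ifP; move: hk' n2; clear; lia.
    case=> heta.
      have [w wF] : exists w, w \in F i k.
        by apply/card_gt0P; rewrite hFe.
      have [s [cs hs]] := Hk w; rewrite heta in hs.
      apply: (cycle_cross cs); rewrite wF hFe /=.
      by move: hs; clear; lia.
    have [w wF] : exists w, w \in ~: F i k.
      apply/card_gt0P; have h := cardsC (F i k); rewrite card_ord hFe in h.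
      by move: h hk' n2; clear; lia.
    have [s [cs hs]] := Hk w; rewrite heta in hs.
    apply: (cycle_cross cs); rewrite -in_setC wF hFe /=.
    apply/orP; right; by move: hs hk' n2; clear; lia.
  have sub : v |: F i k \subset F i k.+1.
    rewrite subUset Fmono andbT sub1set inE.
    by apply: (know_edge euv); move: uF; rewrite inE.
  by have := subset_leq_card sub; rewrite cardsU1 vF hFe.
have allk : forall i j, d i \in knowledge E d (n - 1) j.
  move=> i j.
  have := claim i (n - 1) (leqnn _).
  have -> : (n - 1).+1 = n by move: n2; clear; lia.
  rewrite minnn => hc.
  have : F i (n - 1) == setT by rewrite eqEcard subsetT cardsT card_ord hc.
  move/eqP => hF; have : j \in F i (n - 1) by rewrite hF inE.
  by rewrite in_set.
have cardK : forall j, #|` knowledge E d (n - 1) j| = n.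
  move=> j.
  have -> : knowledge E d (n - 1) j = [fset d x | x : 'I_n]%fset.
    apply/fsetP => x; apply/idP/idP.
      by move=> /know_img [y ->]; apply: in_imfset.
    by move=> /imfsetP [y _ ->]; apply: allk.
  by rewrite card_imfset //= size_enum_ord.
rewrite (eq_bigr (fun _ => n)); last by move=> j _; exact: cardK.
by rewrite sum_nat_const card_ord expnS expn1.
Qed.
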